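(* Let $T$ be a string of length $n$ and $1\le i\le j<n$, and suppose $\#\mathit{occ}_{T[i..j+1]}(\mathit{sqs}_{i,j+1})=2$. Then there are integers $p_l,p_s,q$ with $i\le p_l\le p_s\le q<j+1$ such that $T[p_s..q]=\mathit{sqs}_{i,j+1}$ and $T[p_l..q]=\mathit{lrs}_{i,j+1}$. Moreover, for these integers: (a) if there is no interval $[s',q+1]\in\mathsf{MUS}(T[i..j])$ (no MUS of $T[i..j]$ ending at $q+1$), then $[p_s,q+1]\in\mathsf{MUS}(T[i..j+1])$; (b) if there is no interval $[p_l-1,t']\in\mathsf{MUS}(T[i..j])$ (no MUS of $T[i..j]$ starting at $p_l-1$) and $p_l\ge i+1$, then $[p_l-1,q]\in\mathsf{MUS}(T[i..j+1])$.
   Context: $T[a..b]$ denotes the substring of $T$ from position $a$ to $b$. For strings $S,w$, $\#\mathit{occ}_S(w)$ is the number of positions at which $w$ occurs in $S$, with $\#\mathit{occ}_S(\varepsilon)=|S|+1$. A substring $w$ of $S$ is unique in $S$ if $\#\mathit{occ}_S(w)=1$ and repeating if $\#\mathit{occ}_S(w)\ge 2$. For $1\le i\le j\le n$, $\mathsf{MUS}(T[i..j])$ is the set of intervals $[s,t]$ (positions in $T$) with $i\le s\le t\le j$ such that $T[s..t]$ is unique in $T[i..j]$ and every proper substring of $T[s..t]$ (including the empty string) is repeating in $T[i..j]$. $\mathit{lrs}_{i,j}$ is the longest suffix of $T[i..j]$ occurring at least twice in $T[i..j]$ (possibly empty); $\mathit{sqs}_{i,j}$ is the shortest suffix of $T[i..j]$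 occurring at most twice in $T[i..j]$. *)

(* Defs.v *)
(* Strings are sequences over an eqType alphabet A;
   positions are 1-based as in the paper. *)
From mathcomp Require Import all_boot.
Set Implicit Arguments. Unset Strict Implicit. Unset Printing Implicit Defensive.

Section Strings.
Variable A : eqType.

(* T[a..b] : the substring from position a to position b (1-based, inclusive);
   empty when b < a. *)
Definition substr (T : seq A) (a b : nat) : seq A := take (b.+1 - a) (drop a.-1 T).

(* #occ_S(w): number of positions at which w occurs in S
   (for w = [::] this is size S + 1). *)
Definition occ (S w : seq A) : nat :=
  if size w <= size S then
    count (fun k => take (size w) (drop k S) == w) (iota 0 (size S - size w).+1)
  else 0.

(* lrs of S: longest suffix of S occurring at least twice in S (possibly empty).
   Suffixes of S are drop k S, k = 0..|S|; the smallest such k gives the longest. *)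
Definition lrs (S : seq A) : seq A :=
  drop (find (fun k => 2 <= occ S (drop k S)) (iota 0 (size S).+1)) S.

(* sqs of S: shortest suffix of S occurring at most twice in S.
   m ranges over suffix lengths 0..|S|; the smallest such m is taken. *)
Definition sqs (S : seq A) : seq A :=
  drop (size S - find (fun m => occ S (drop (size S - m) S) <= 2) (iota 0 (size S).+1)) S.

Definition isMUS (T : seq A) (i j s t : nat) : Prop :=
  let S := substr T i j in
  let w := substr T s t in
  [/\ i <= s, s <= t, t <= j,
      occ S w = 1 &
      forall u : seq A, infix u w -> u != w -> 2 <= occ S u].

End Strings.

(* Main.v *)
Require Import Defs.
From mathcomp Require Import all_boot zify.
Set Implicit Arguments. Unset Strict Implicit. Unset Printing Implicit Defensive.

Section H.
Variable A : eqType.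
Implicit Types S w u : seq A.

Definition win S k l := take l (drop k S).
Definition isocc S w k := (k + size w <= size S) && (win S k (size w) == w).

Lemma size_win S k l : k + l <= size S -> size (win S k l) = l.
Proof. by move=> h; rewrite /win size_takel // size_drop; lia. Qed.

Lemma drop_take' (X : seq A) d n : drop d (take n X) = take (n - d) (drop d X).
Proof.
elim: X d n => [|x X IH] [|d] [|n] //=; rewrite ?drop0 ?subn0 ?sub0n //.
  by rewrite take0.
by rewrite IH subSS.
Qed.

Lemma win_win S k n d l : d + l <= n -> win (win S k n) d l = win S (k + d) l.
Proof.
by move=> h; rewrite /win drop_take' take_takel ?drop_drop 1?addnC //; lia.
Qed.

Lemma occE S w : occ S w = count (isocc S w) (iota 0 (size S).+1).
Proof.
rewrite /occ; case: leqP => h.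
  have -> : (size S).+1 = (size S - size w).+1 + size w by lia.
  rewrite iotaD count_cat.
  rewrite (@eq_in_count _ _ (isocc S w) (iota 0 (size S - size w).+1)); last first.
    move=> k; rewrite mem_iota /isocc /win => /andP[hk hk']; have -> : k + size w <= size S by lia.
    done.
  rewrite (@eq_in_count _ (isocc S w) pred0 (iota (0 + (size S - size w).+1) (size w))); last first.
    move=> k; rewrite mem_iota /isocc => /andP[hk hk'] /=; apply/negbTE; apply/negP => /andP[h1 _]; lia.
  by rewrite count_pred0 addn0.
rewrite (@eq_in_count _ (isocc S w) pred0); first by rewrite count_pred0.
move=> k _; rewrite /isocc /=; apply/negbTE; apply/negP => /andP[h1 _]; lia.
Qed.

Lemma occ_geL S w (L : seq nat) : uniq L -> all (isocc S w) L -> size L <= occ S w.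
Proof.
move=> uL /allP aL; rewrite occE -size_filter; apply: uniq_leq_size => // k kL.
rewrite mem_filter aL // andTb mem_iota; have := aL k kL; rewrite /isocc => /andP[h _]; lia.
Qed.

Lemma occ_leL S w (L : seq nat) : (forall k, isocc S w k -> k \in L) -> occ S w <= size L.
Proof.
move=> hL; rewrite occE -size_filter; apply: uniq_leq_size; first by rewrite filter_uniq // iota_uniq.
by move=> k; rewrite mem_filter => /andP[/hL].
Qed.

Lemma occ_map S1 S2 w1 w2 d :
  (forall k, isocc S1 w1 k -> isocc S2 w2 (k + d)) -> occ S1 w1 <= occ S2 w2.
Proof.
move=> h; set L := filter (isocc S1 w1) (iota 0 (size S1).+1).
have -> : occ S1 w1 = size (map (addn^~ d) L) by rewrite size_map occE size_filter.
apply: occ_geL.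
  rewrite map_inj_uniq; first by rewrite filter_uniq // iota_uniq.
  by move=> x y /= /eqP; rewrite eqn_add2r => /eqP.
apply/allP => k /mapP [x]; rewrite mem_filter => /andP[hx _] ->; exact: h.
Qed.


Lemma isocc_win S k l : k + l <= size S -> isocc S (win S k l) k.
Proof. by move=> h; rewrite /isocc size_win // h eqxx. Qed.

Lemma isocc_sub S w k d l : isocc S w k -> d + l <= size w -> isocc S (win w d l) (k + d).
Proof.
move=> /andP[h1 /eqP h2] h3; rewrite /isocc size_win //.
apply/andP; split; first lia.
by rewrite -h2 win_win // addnC.
Qed.

Lemma win_take S n k l : k + l <= n -> win (take n S) k l = win S k l.
Proof. by move=> h; rewrite /win drop_take' take_takel //; lia. Qed.

Lemma isocc_takeL S n x k : isocc (take n S) x k -> isocc S x k.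
Proof.
move=> /andP[h1 /eqP h2]; apply/andP; split.
  by apply: leq_trans h1 _; rewrite size_take; case: ifP => // /ltnW.
rewrite -(@win_take S n) ?h2 //; move: h1; rewrite size_take; case: ifP => //; lia.
Qed.

Lemma isocc_takeR S n x k : isocc S x k -> k + size x <= n -> isocc (take n S) x k.
Proof.
move=> /andP[h1 /eqP h2] h3; apply/andP; split.
  by rewrite size_take; case: ifP.
by rewrite win_take ?h2.
Qed.

Lemma occ_take_le S n x : occ (take n S) x <= occ S x.
Proof. by apply: (@occ_map _ _ _ _ 0) => k; rewrite addn0; apply: isocc_takeL. Qed.

Lemma occ_take_ge S x : occ S x <= (occ (take (size S).-1 S) x).+1.
Proof.
set S0 := take (size S).-1 S.
have -> : (occ S0 x).+1 = size (rcons (filter (isocc S0 x) (iota 0 (size S0).+1)) (size S - size x)).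
  by rewrite size_rcons occE size_filter.
apply: occ_leL => k hk; rewrite mem_rcons inE.
case: (leqP (k + size x) (size S).-1) => h.
  apply/orP; right; rewrite mem_filter isocc_takeR // andTb mem_iota.
  rewrite /S0 size_take; case: ifP => _; lia.
apply/orP; left; apply/eqP; move: hk => /andP[h1 _]; lia.
Qed.

Lemma occ_infix S u w : infix u w -> occ S w <= occ S u.
Proof.
move=> /infixP [p [r ->]].
have e : win (p ++ u ++ r) (size p) (size u) = u.
  by rewrite /win drop_size_cat // take_size_cat.
apply: (@occ_map _ _ _ _ (size p)) => k hk; rewrite -{1}e; apply: isocc_sub => //.
rewrite !size_cat; lia.
Qed.

Lemma occ_self S : occ S S = 1.
Proof.
apply/eqP; rewrite eqn_leq; apply/andP; split.
  apply: (@occ_leL _ _ [:: 0]) => k /andP[h _]; rewrite inE; apply/eqP; lia.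
apply: (@occ_geL _ _ [:: 0]) => //=; rewrite andbT /isocc /win drop0 take_size eqxx.
by rewrite add0n leqnn.
Qed.

Lemma occ_nil S : occ S [::] = (size S).+1.
Proof.
rewrite /occ [size [::]]/= leq0n subn0 (@eq_count _ _ predT) ?count_predT ?size_iota //.
by move=> k; rewrite take0.
Qed.

Lemma occ_pos S w a : isocc S w a -> 1 <= occ S w.
Proof. by move=> h; apply: (@occ_geL _ _ [:: a]) => //=; rewrite h. Qed.

Lemma occ1_uniq S w a c : occ S w <= 1 -> isocc S w a -> isocc S w c -> c = a.
Proof.
move=> ho ha hc; apply/eqP; apply/negP => /negP hne.
have := @occ_geL S w [:: a; c]; rewrite /= inE eq_sym hne ha hc /= => /(_ isT isT) h; lia.
Qed.

Lemma occ2_cases S w a b c : occ S w <= 2 -> isocc S w a -> isocc S w b -> a != b ->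
  isocc S w c -> c = a \/ c = b.
Proof.
move=> ho ha hb hab hc.
case: (eqVneq c a) => [|hca]; first by left.
case: (eqVneq c b) => [|hcb]; first by right.
have u3 : uniq [:: a; b; c].
  by rewrite /= !inE negb_or hab eq_sym hca eq_sym hcb.
have := @occ_geL S w [:: a; b; c] u3; rewrite /= ha hb hc /= => /(_ isT) h; lia.
Qed.

Lemma occ_other S w a : 2 <= occ S w -> isocc S w a -> exists b, b != a /\ isocc S w b.
Proof.
move=> ho ha.
case: (boolP (has (fun b => (b != a) && isocc S w b) (iota 0 (size S).+1))).
  by move=> /hasP [b _ /andP[h1 h2]]; exists b.
move=> /hasPn hn.
have : occ S w <= size [:: a].
  apply: occ_leL => k hk; rewrite inE; apply/negPn/negP => hka.
  have : k \in iota 0 (size S).+1 by rewrite mem_iota; move: hk => /andP[h _]; lia.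
  by move=> /hn; rewrite hka hk.
by rewrite /=; lia.
Qed.

Lemma infix_split u w : infix u w -> u != w ->
  infix u (drop 1 w) \/ infix u (take (size w).-1 w).
Proof.
move=> /infixP [p [r ->]] hne.
case: p hne => [|x p] hne.
  case/lastP: r hne => [|r y] hne; first by rewrite /= cats0 eqxx in hne.
  right; rewrite /= size_cat size_rcons -cats1 catA take_size_cat; last by rewrite size_cat; lia.
  exact: prefix_infix.
left; rewrite /= drop0; exact: infix_infix.
Qed.


Lemma isocc_winsub S a n k d l : isocc S (win S a n) k -> a + n <= size S -> d + l <= n ->
  isocc S (win S (a + d) l) (k + d).
Proof.
move=> h1 h2 h3; rewrite -(@win_win _ _ n) //; apply: isocc_sub => //; rewrite size_win //.
Qed.

Lemma drop1_win S k l : drop 1 (win S k l) = win S k.+1 l.-1.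
Proof. by rewrite /win drop_take' drop_drop subn1 add1n. Qed.

Lemma takeL_win S k l : k + l <= size S -> take (size (win S k l)).-1 (win S k l) = win S k l.-1.
Proof. by move=> h; rewrite size_win // /win take_takel // leq_pred. Qed.

Lemma win_drop_suffix S n d l : n + d + l = size S -> win (drop n S) d l = drop (n + d) S.
Proof. by move=> h; rewrite /win drop_drop take_oversize addnC // size_drop; lia. Qed.

Lemma ge2 S w a : isocc S w a -> occ S w != 1 -> 2 <= occ S w.
Proof. by move=> /occ_pos h1 h2; move: h1 h2; case: (occ S w) => [|[|n]]. Qed.

Lemma mus_infix S w : 2 <= occ S (drop 1 w) -> 2 <= occ S (take (size w).-1 w) ->
  forall u, infix u w -> u != w -> 2 <= occ S u.
Proof.
move=> h1 h2 u hu hne; case: (infix_split hu hne) => h.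
  exact: leq_trans h1 (occ_infix _ h).
exact: leq_trans h2 (occ_infix _ h).
Qed.

Lemma size_take_pred S : size (take (size S).-1 S) = (size S).-1.
Proof. by rewrite size_takel // leq_pred. Qed.

Lemma sqs_spec S : exists f, [/\ sqs S = drop (size S - f) S, f <= size S &
  forall l, l < f -> 2 < occ S (drop (size S - l) S)].
Proof.
set P := (fun m => occ S (drop (size S - m) S) <= 2).
have hP : has P (iota 0 (size S).+1).
  apply/hasP; exists (size S); first by rewrite mem_iota; lia.
  by rewrite /P subnn drop0 occ_self.
exists (find P (iota 0 (size S).+1)); split => //.
  by move: hP; rewrite has_find size_iota.
move=> l hl; have := before_find 0 hl; rewrite nth_iota ?add0n.
  by rewrite /P => /negbT; rewrite -ltnNge.
by move: hP; rewrite has_find size_iota => h; lia.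
Qed.

Lemma lrs_spec S : 1 <= size S -> exists g, [/\ lrs S = drop g S, g <= size S, 2 <= occ S (lrs S) &
  forall k, k < g -> occ S (drop k S) < 2].
Proof.
move=> hS; set Q := (fun k => 2 <= occ S (drop k S)).
have hQ : has Q (iota 0 (size S).+1).
  apply/hasP; exists (size S); first by rewrite mem_iota; lia.
  by rewrite /Q drop_size occ_nil; lia.
exists (find Q (iota 0 (size S).+1)); split => //.
    by move: hQ; rewrite has_find size_iota.
  have := nth_find 0 hQ; rewrite nth_iota ?add0n //.
  by move: hQ; rewrite has_find size_iota.
move=> l hl; have := before_find 0 hl; rewrite nth_iota ?add0n.
  by rewrite /Q => /negbT; rewrite -ltnNge.
by move: hQ; rewrite has_find size_iota => h; lia.
Qed.

End H.

Lemma substr_win (A : eqType) (T : seq A) i j' s t : 1 <= i -> i <= s -> t <= j' -> j' <= size T ->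
  s <= t.+1 -> substr T s t = win (substr T i j') (s - i) (t.+1 - s).
Proof.
move=> h1 h2 h3 h4 h5; rewrite /substr /win drop_take' drop_drop take_takel; last lia.
by have -> : s - i + i.-1 = s.-1 by lia.
Qed.

Lemma size_substr (A : eqType) (T : seq A) i j' : 1 <= i -> i <= j'.+1 -> j' <= size T ->
  size (substr T i j') = j'.+1 - i.
Proof. by move=> h1 h2 h3; rewrite /substr size_takel // size_drop; lia. Qed.

Theorem lemma6 (A : eqType) (T : seq A) (i j : nat) :
  1 <= i -> i <= j -> j < size T ->
  occ (substr T i j.+1) (sqs (substr T i j.+1)) = 2 ->
  exists pl ps q : nat,
    i <= pl /\ pl <= ps /\ ps <= q /\ q < j.+1 /\
    substr T ps q = sqs (substr T i j.+1) /\
    substr T pl q = lrs (substr T i j.+1) /\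
    ((~ exists s', isMUS T i j s' q.+1) -> isMUS T i j.+1 ps q.+1) /\
    ((~ exists t', isMUS T i j pl.-1 t') -> i.+1 <= pl -> isMUS T i j.+1 pl.-1 q).
Proof.
move=> hi hij hj hocc.
have hm : size (substr T i j.+1) = j.+2 - i by rewrite size_substr //; lia.
have hsub : forall s t, i <= s -> t <= j.+1 -> s <= t.+1 ->
    substr T s t = win (substr T i j.+1) (s - i) (t.+1 - s).
  by move=> s t h1 h2 h3; apply: substr_win.
have hS0 : substr T i j = take (size (substr T i j.+1)).-1 (substr T i j.+1).
  by rewrite hm /substr take_takel; [congr take; lia | lia].
have hsub0 : forall s t, i <= s -> t <= j -> s <= t.+1 ->
    substr T s t = win (take (size (substr T i j.+1)).-1 (substr T i j.+1)) (s - i) (t.+1 - s).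
  by move=> s t h1 h2 h3; rewrite -hS0; apply: substr_win => //; lia.
move: hm hsub hsub0 hocc hS0.
set S := substr T i j.+1; set S0 := take (size S).-1 S => hm hsub hsub0 hocc hS0.
have hS0s : size S0 = (size S).-1 by rewrite size_take_pred.
case: (sqs_spec S) => f [esq hfm hfmin].
case: (@lrs_spec _ S _) => [|g [elr hgm hlr2 hgmin]]; first lia.
have hf1 : 1 <= f.
  case: f esq {hfm hfmin} => // esq; move: hocc; rewrite esq subn0 drop_size occ_nil; lia.
have hgf : g <= size S - f.
  rewrite leqNgt; apply/negP => h; have := hgmin _ h; rewrite -esq hocc //.
set L := size S - g.
have hlrw : lrs S = win S g L by rewrite elr /win take_oversize // size_drop.
have esq' : sqs S = win (lrs S) (L - f) f.
  by rewrite elr win_drop_suffix ?esq; [congr drop| ]; lia.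
have hlr : occ S (lrs S) = 2.
  apply/eqP; rewrite eqn_leq; apply/andP; split.
    rewrite -hocc; apply: occ_infix; rewrite esq' /win.
    exact: infix_trans (infix_take _ _) (infix_drop _ _).
  exact: hlr2.
have hL : size (lrs S) = L by rewrite elr size_drop.
have hLf : f <= L by rewrite /L; lia.
have hocg : isocc S (lrs S) g.
  apply/andP; split; first by rewrite hL /L; lia.
  by rewrite hL -hlrw.
case: (occ_other _ hocg) => [|k0 [/eqP hk0g hk0]]; first by rewrite hlr.
have ek0 : win S k0 L = lrs S by move: hk0 => /andP[_ /eqP]; rewrite hL.
have hk0L : k0 + L <= (size S).-1.
  by move: hk0 => /andP[h _]; move: h; rewrite hL /L; lia.
set ps := k0 + (L - f).
have e1 : sqs S = win S ps f by rewrite esq' -ek0 win_win //; lia.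
have hsz : size (sqs S) = f by rewrite esq size_drop; lia.
have hsqa : isocc S (sqs S) ps by rewrite e1; apply: isocc_win; rewrite /ps; lia.
have hsqb : isocc S (sqs S) (size S - f).
  apply/andP; split; first by rewrite hsz; lia.
  by rewrite hsz esq /win take_oversize // size_drop; lia.
have hpsne : ps != size S - f by apply/eqP; rewrite /ps; lia.
exists (i + k0), (i + ps), (i + (k0 + L).-1).
split; first lia. split; first by rewrite /ps; lia.
split; first by rewrite /ps; lia. split; first by lia.
split.
  rewrite hsub; try (rewrite /ps; lia).
  by rewrite e1; congr win; rewrite /ps; lia.
split.
  rewrite hsub; try lia.
  by rewrite -ek0; congr win; lia.
split.
  move=> hnA.
  have eq1 : (i + (k0 + L).-1).+1 = i + (k0 + L) by lia.
  rewrite eq1 in hnA *.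
  rewrite /isMUS -/S (hsub (i + ps) (i + (k0 + L))); try (rewrite /ps; lia).
  have -> : i + ps - i = ps by lia.
  have -> : (i + (k0 + L)).+1 - (i + ps) = f.+1 by rewrite /ps; lia.
  have hwin : ps + f.+1 <= size S by rewrite /ps; lia.
  split; try (rewrite /ps; lia).
    apply/eqP; rewrite eqn_leq; apply/andP; split; last first.
      by apply: (@occ_pos _ _ _ ps); apply: isocc_win.
    apply: (@occ_leL _ _ _ [:: ps]) => k hk; rewrite inE; apply/eqP.
    have hk' := @isocc_winsub _ _ _ _ _ 0 f hk hwin (leqnSn _).
    rewrite !addn0 -e1 in hk'.
    case: (occ2_cases _ hsqa hsqb hpsne hk'); rewrite ?hocc //.
    by move=> hkk; move: hk => /andP[h _]; move: h; rewrite size_win // hkk; lia.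
  apply: mus_infix; last first.
    by rewrite takeL_win // -e1 hocc.
  rewrite drop1_win /=.
  rewrite leqNgt; apply/negP => hlt.
  case: (eqVneq (k0 + L) (size S).-1) => hE.
    have e : win S ps.+1 f = sqs S.
      by rewrite esq /win take_oversize; [congr drop | rewrite size_drop]; rewrite /ps; lia.
    by rewrite e hocc in hlt.
  apply: hnA.
  set e := k0 + L.
  have hwe : e.+1 <= (size S).-1 by rewrite /e; lia.
  set P := (fun s => (s < e.+1) && (occ S0 (win S0 s (e.+1 - s)) == 1)).
  have hPps : P ps.+1.
    apply/andP; split; first by rewrite /e /ps; lia.
    have -> : e.+1 - ps.+1 = f by rewrite /e /ps; lia.
    rewrite eqn_leq; apply/andP; split.
      rewrite /S0 win_take; first by apply: leq_trans (occ_take_le _ _ _) _; lia.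
      by rewrite /e /ps in hwe *; lia.
    apply: (@occ_pos _ _ _ ps.+1); apply: isocc_win; rewrite hS0s; rewrite /e /ps in hwe *; lia.
  have exP : exists s, P s by exists ps.+1.
  have ubP : forall s, P s -> s <= e.+1.
    by move=> s /andP[h _]; lia.
  case: (ex_maxnP exP ubP) => s /andP[hs1 /eqP hs2] hmax.
  have hps_s : ps.+1 <= s by apply: hmax.
  exists (i + s).
  rewrite /isMUS hS0 (hsub0 (i + s) (i + e)); try (rewrite /e in hwe *; lia).
  have -> : i + s - i = s by lia.
  have -> : (i + e).+1 - (i + s) = e.+1 - s by lia.
  split; try (rewrite /e in hwe *; lia).
  exact: hs2.
  apply: mus_infix.
    rewrite drop1_win.
    case: (ltngtP s e) => hse.
    - apply: (@ge2 _ _ _ s.+1); first by apply: isocc_win; rewrite hS0s; lia.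
      have -> : (e.+1 - s).-1 = e.+1 - s.+1 by lia.
      apply/negP => /eqP h; have := hmax s.+1; rewrite /P h eqxx andbT ltnS hse => /(_ isT); lia.
    - lia.
    - rewrite hse subSnn /= /win take0 occ_nil; lia.
  rewrite takeL_win; last by rewrite hS0s; lia.
  rewrite /S0 win_take; last lia.
  have -> : (e.+1 - s).-1 = e - s by lia.
  have hx : win S s (e - s) = drop (size S - (e - s)) S.
    have -> : s = ps + (s - ps) by lia.
    rewrite -(@win_win _ _ _ f); last by rewrite /e /ps; lia.
    rewrite -e1 esq win_drop_suffix; last by rewrite /e /ps; lia.
    by congr drop; rewrite /e /ps; lia.
  have h3 := hfmin (e - s) ltac:(rewrite /e /ps in hps_s *; lia).
  rewrite hx; have := occ_take_ge S (drop (size S - (e - s)) S); lia.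
move=> hnB hpl.
have hk01 : 1 <= k0 by lia.
have eq2 : (i + k0).-1 = i + k0.-1 by lia.
rewrite eq2 in hnB *.
rewrite /isMUS -/S (hsub (i + k0.-1) (i + (k0 + L).-1)); try lia.
have -> : i + k0.-1 - i = k0.-1 by lia.
have -> : (i + (k0 + L).-1).+1 - (i + k0.-1) = L.+1 by lia.
have hwin : k0.-1 + L.+1 <= size S by lia.
split; try lia.
  apply/eqP; rewrite eqn_leq; apply/andP; split; last first.
    by apply: (@occ_pos _ _ _ k0.-1); apply: isocc_win.
  apply: (@occ_leL _ _ _ [:: k0.-1]) => k hk; rewrite inE; apply/eqP.
  have hk' := @isocc_winsub _ _ _ _ _ 1 L hk hwin (leqnn _).
  have ee : k0.-1 + 1 = k0 by lia.
  rewrite ee ek0 in hk'.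
  case: (occ2_cases _ hk0 hocg _ hk'); rewrite ?hlr //; first by apply/eqP.
    lia.
  move=> hkg.
  have hw : win S k0.-1 L.+1 = drop k S.
    move: hk => /andP[h1 /eqP h2]; rewrite size_win // in h1 h2.
    by rewrite -h2 /win take_oversize // size_drop; rewrite /L in h1 *; lia.
  have := hgmin k ltac:(lia).
  rewrite -hw ltnNge => /negP []; apply: (@occ_geL _ _ _ [:: k0.-1; k]).
    by rewrite /= inE andbT; apply/eqP; lia.
  by rewrite /= isocc_win //= andbT.
apply: mus_infix.
  rewrite drop1_win /=.
  have -> : (k0.-1).+1 = k0 by lia.
  by rewrite ek0 hlr.
rewrite takeL_win //=.
rewrite leqNgt; apply/negP => hlt.
apply: hnB.
set P := (fun l => (l <= L) && (occ S0 (win S0 k0.-1 l) == 1)).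
have hPL : P L.
  apply/andP; split => //.
  rewrite eqn_leq; apply/andP; split.
    rewrite /S0 win_take; last lia.
    by apply: leq_trans (occ_take_le _ _ _) _; lia.
  apply: (@occ_pos _ _ _ k0.-1); apply: isocc_win; rewrite hS0s; lia.
have exP : exists l, P l by exists L.
case: (ex_minnP exP) => l /andP[hl1 /eqP hl2] hmin.
have hl0 : 1 <= l.
  case: l hl1 hl2 {hmin} => // _; rewrite /win take0 occ_nil hS0s; lia.
exists (i + k0.-1 + l.-1).
rewrite /isMUS hS0 (hsub0 (i + k0.-1) (i + k0.-1 + l.-1)); try lia.
have -> : i + k0.-1 - i = k0.-1 by lia.
have -> : (i + k0.-1 + l.-1).+1 - (i + k0.-1) = l by lia.
split; try lia.
apply: mus_infix.
  rewrite drop1_win.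
  have -> : (k0.-1).+1 = k0 by lia.
  apply: (@occ_geL _ _ _ [:: k0; g]).
    by rewrite /= inE andbT; apply/eqP.
  rewrite /= andbT; apply/andP; split.
    by apply: isocc_win; rewrite hS0s; lia.
  apply: isocc_takeR; last by rewrite size_win; lia.
  rewrite /S0 win_take; last lia.
  have hocg' : isocc S (win S k0 L) g by rewrite ek0.
  have := @isocc_winsub _ _ _ _ _ 0 (l.-1) hocg'; rewrite !addn0; apply; lia.
rewrite takeL_win; last by rewrite hS0s; lia.
apply: (@ge2 _ _ _ k0.-1); first by apply: isocc_win; rewrite hS0s; lia.
apply/negP => /eqP h; have := hmin l.-1; rewrite /P h eqxx andbT => /(_ ltac:(lia)); lia.
Qed.
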